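(* Let $\xi$ be a model with $\xi(1)=1$ which is not of the form $\xi(t)=at^2$. Let $m,c>0$ solve $$\xi(1)=\frac1m\Big(\frac1m\log\Big(\frac{c+m}{c}\Big)-\frac1{c+m}\Big),\qquad\frac1{\xi'(1)}=c(c+m),$$ and let $\eta(t)=\xi(1)-\int_t^1\int_0^s\phi(\tau)^{-2}d\tau\,ds$ with $\phi(t)=m(1-t)+c$. Then $\eta''(1)\ge\xi''(1)$ if and only if $\xi$ is pure-like or critical.
   Context: A model is $\xi(t)=\sum_{p\ge2}\beta_p^2t^p$, real $\beta_p$ not all zero, with $\xi(1+\epsilon)<\infty$ for some $\epsilon>0$. With $\nu'=\xi'(1)$, $\nu''=\xi''(1)$, define $ABA=\log(\nu''/\nu')-\frac{(\nu''-\nu')(\nu''-\nu'+\nu'^2)}{\nu''\nu'^2}$; $\xi$ is pure-like if $ABA>0$ and critical if $ABA=0$. *)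

(* Defs.v *)
From Stdlib Require Import Reals Lra.
From Coquelicot Require Import Coquelicot.
Open Scope R_scope.

Definition xi_coef (beta : nat -> R) (n : nat) : R :=
  if (2 <=? n)%nat then (beta n) ^ 2 else 0.

Definition xi (beta : nat -> R) (t : R) : R := PSeries (xi_coef beta) t.

Definition is_model (beta : nat -> R) : Prop :=
  (exists p : nat, (2 <= p)%nat /\ beta p <> 0) /\
  (exists eps : R, 0 < eps /\ ex_pseries (xi_coef beta) (1 + eps)).

Definition nu1 (beta : nat -> R) : R := Derive (xi beta) 1.
Definition nu2 (beta : nat -> R) : R := Derive_n (xi beta) 2 1.

Definition ABA (beta : nat -> R) : R :=
  ln (nu2 beta / nu1 beta)
  - (nu2 beta - nu1 beta) * (nu2 beta - nu1 beta + (nu1 beta) ^ 2)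
    / (nu2 beta * (nu1 beta) ^ 2).

Definition pure_like (beta : nat -> R) : Prop := ABA beta > 0.
Definition critical (beta : nat -> R) : Prop := ABA beta = 0.

Definition phi (m c t : R) : R := m * (1 - t) + c.

Definition eta (beta : nat -> R) (m c t : R) : R :=
  xi beta 1 - RInt (fun s => RInt (fun tau => / (phi m c tau) ^ 2) 0 s) t 1.

(* Main.v *)
Require Import Defs.
From Stdlib Require Import Reals Lra Psatz Lia.
From Coquelicot Require Import Coquelicot.
Open Scope R_scope.
Definition ff (K r : R) := ln r - (r - 1) / r - K * (r - 1) ^ 2 / r.
Definition Df (K s : R) := (s - 1) * (1 - K * (s + 1)) / s ^ 2.

Lemma ff_deriv K s : 0 < s -> derivable_pt_lim (ff K) s (Df K s).
Proof.
  intros Hs. apply is_derive_Reals. unfold ff, Df.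
  auto_derive. { lra. }
  field. lra.
Qed.

Lemma ff_1 K : ff K 1 = 0.
Proof. unfold ff. rewrite ln_1. field. Qed.

Lemma mvt K a b : 0 < a -> a < b -> exists z, ff K b - ff K a = Df K z * (b - a) /\ a < z < b.
Proof.
  intros Ha Hab. apply MVT_cor2; auto. intros z Hz. apply ff_deriv. lra.
Qed.

Lemma Df_pos K z : 1 < z -> 0 < 1 - K * (z + 1) -> 0 < Df K z.
Proof. intros. unfold Df. apply Rdiv_lt_0_compat. nra. nra. Qed.
Lemma Df_neg K z : 1 < z -> 1 - K * (z + 1) < 0 -> Df K z < 0.
Proof. intros. unfold Df. unfold Rdiv. assert (0 < / z^2) by (apply Rinv_0_lt_compat; nra).
  assert ((z - 1) * (1 - K * (z + 1)) < 0) by nra. nra. Qed.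

Lemma key K x r : 0 < K -> 1 < x -> 1 <= r -> ff K x = 0 -> (0 <= ff K r <-> r <= x).
Proof.
  intros HK Hx Hr Hfx. split.
  - intros H. destruct (Rle_or_lt r x) as [|Hrx]; auto. exfalso.
    destruct (Rle_or_lt 0 (1 - K * (x + 1))) as [Hc|Hc].
    + destruct (mvt K 1 x) as [z [Hz1 Hz2]]; try lra.
      assert (0 < Df K z) by (apply Df_pos; nra). rewrite ff_1 in Hz1. nra.
    + destruct (mvt K x r) as [z [Hz1 Hz2]]; try lra.
      assert (Df K z < 0) by (apply Df_neg; nra). nra.
  - intros Hrx. destruct (Req_dec r 1) as [->|Hr1]. { rewrite ff_1; lra. }
    destruct (Rle_or_lt 0 (1 - K * (r + 1))) as [Hc|Hc].
    + destruct (mvt K 1 r) as [z [Hz1 Hz2]]; try lra.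
      assert (0 < Df K z) by (apply Df_pos; nra). rewrite ff_1 in Hz1. nra.
    + destruct (Req_dec r x) as [->|Hne]. lra.
      destruct (mvt K r x) as [z [Hz1 Hz2]]; try lra.
      assert (Df K z < 0) by (apply Df_neg; nra). nra.
Qed.

Lemma coef_nonneg beta n : 0 <= xi_coef beta n.
Proof. unfold xi_coef. destruct (2 <=? n)%nat. apply pow2_ge_0. lra. Qed.

Lemma radius_gt1 beta : is_model beta -> Rbar_lt (Rabs 1) (CV_radius (xi_coef beta)).
Proof.
  intros [_ [eps [He Hex]]].
  assert (Hd : CV_disk (xi_coef beta) (1 + eps)).
  { unfold CV_disk. destruct Hex as [l Hl]. exists l. apply is_pseries_R in Hl.
    eapply is_series_ext; [|exact Hl]. intros n. simpl.
    rewrite Rabs_pos_eq. reflexivity.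
    apply Rmult_le_pos. apply coef_nonneg. apply pow_le. lra. }
  assert (H := proj1 (Lub_Rbar_correct (CV_disk (xi_coef beta))) _ Hd).
  unfold CV_radius. rewrite Rabs_R1.
  destruct (Lub_Rbar (CV_disk (xi_coef beta))); simpl in *; auto; lra.
Qed.

Lemma series_nonneg (a : nat -> R) : (forall n, 0 <= a n) -> ex_pseries a 1 -> 0 <= PSeries a 1.
Proof.
  intros Ha Hex. unfold PSeries.
  assert (Series (fun _ : nat => 0) = 0).
  { transitivity (0 * Series (fun _:nat => 0)); [|ring].
    rewrite <- Series_scal_l. apply Series_ext; intros; ring. }
  rewrite <- H. apply Series_le.
  - intros n. split. lra. rewrite pow1. rewrite Rmult_1_r. auto.
  - destruct Hex as [l Hl]. exists l. apply is_pseries_R. exact Hl.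
Qed.

Lemma nu2_ge_nu1 beta : is_model beta -> nu1 beta <= nu2 beta.
Proof.
  intros Hm. assert (Hr := radius_gt1 beta Hm).
  set (a := xi_coef beta) in *.
  unfold nu1, nu2, xi. fold a.
  change (Derive (fun t => PSeries a t) 1) with (Derive (PSeries a) 1).
  change (Derive_n (fun t => PSeries a t) 2 1) with (Derive_n (PSeries a) 2 1).
  rewrite Derive_PSeries by auto. rewrite Derive_n_PSeries by auto.
  assert (E1 : ex_pseries (PS_derive a) 1) by (apply ex_pseries_derive; auto).
  assert (E2 : ex_pseries (PS_derive_n 2 a) 1).
  { apply CV_radius_inside. rewrite CV_radius_derive_n. auto. }
  rewrite PSeries_decr_1 by auto.
  assert (E3 : ex_pseries (PS_decr_1 (PS_derive a)) 1).
  { apply ex_pseries_decr_1; auto. right. exists 1. apply Rmult_1_l. }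
  assert (H0 : PS_derive a 0 = 0).
  { unfold PS_derive, a, xi_coef. simpl. ring. }
  rewrite H0. rewrite Rplus_0_l, Rmult_1_l.
  cut (0 <= PSeries (PS_minus (PS_derive_n 2 a) (PS_decr_1 (PS_derive a))) 1).
  { rewrite PSeries_minus by auto. lra. }
  apply series_nonneg; [|apply ex_pseries_minus; auto].
  intros n.
  assert (E : PS_minus (PS_derive_n 2 a) (PS_decr_1 (PS_derive a)) n =
     INR (Factorial.fact (S (S n))) / INR (Factorial.fact n) * a (S (S n)) - INR (S (S n)) * a (S (S n))).
  { unfold PS_minus, PS_decr_1, PS_derive, PS_derive_n.
    replace (n + 2)%nat with (S (S n)) by lia. reflexivity. }
  rewrite E.
  assert (0 < INR (Factorial.fact n)) by apply INR_fact_lt_0.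
  change (Factorial.fact (S (S n))) with (S (S n) * (S n * Factorial.fact n))%nat.
  rewrite !mult_INR, !S_INR.
  assert (0 <= INR n) by apply pos_INR. assert (0 <= a (S (S n))) by apply coef_nonneg.
  replace ((INR n + 1 + 1) * ((INR n + 1) * INR (Factorial.fact n)) / INR (Factorial.fact n) *
     a (S (S n)) - ((INR n + 1 + 1) * a (S (S n)))) with ((INR n + 1 + 1) * INR n * a (S (S n))) by (field; lra).
  apply Rmult_le_pos; auto. nra.
Qed.

Section E.
Variables (m c : R) (Hm : 0 < m) (Hc : 0 < c).
Let T0 := 1 + c / m.
Let h := fun tau => / (phi m c tau) ^ 2.
Let G := fun s => RInt h 0 s.

Lemma phi_pos t : t < T0 -> 0 < phi m c t.
Proof.
  intros Ht. unfold phi, T0 in *.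
  assert (m * t < m + c). { apply Rlt_le_trans with (m * (1 + c/m)). nra. right; field; lra. }
  lra.
Qed.

Lemma T0_gt1 : 1 < T0.
Proof. unfold T0. assert (0 < c/m) by (apply Rdiv_lt_0_compat; lra). lra. Qed.

Lemma loc_lt t : t < T0 -> locally t (fun y => y < T0).
Proof.
  intros Ht. assert (He : 0 < T0 - t) by lra. exists (mkposreal _ He).
  intros y Hy. unfold ball in Hy; simpl in Hy. unfold AbsRing_ball, abs, minus, plus, opp in Hy; simpl in Hy.
  apply Rabs_lt_between' in Hy. lra.
Qed.

Lemma h_cont z : z < T0 -> continuous h z.
Proof.
  intros Hz. apply (@ex_derive_continuous R_AbsRing R_NormedModule). unfold h. assert (H := phi_pos z Hz).
  unfold phi in *. auto_derive. nra.
Qed.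

Lemma G_deriv s : s < T0 -> is_derive G s (h s).
Proof.
  intros Hs. apply is_derive_RInt with 0.
  - eapply filter_imp; [|apply (loc_lt s Hs)]. intros y Hy.
    apply RInt_correct. apply ex_RInt_continuous. intros z Hz. apply h_cont.
    assert (Rmax 0 y < T0) by (apply Rmax_lub_lt; [pose proof T0_gt1; lra | lra]). lra.
  - apply h_cont; auto.
Qed.

Lemma G_cont z : z < T0 -> continuous G z.
Proof. intros Hz. apply (@ex_derive_continuous R_AbsRing R_NormedModule). eexists. apply G_deriv; auto. Qed.

Lemma eta_deriv beta t : t < T0 -> is_derive (eta beta m c) t (G t).
Proof.
  intros Ht. unfold eta.
  replace (G t) with (0 - opp (G t)) by (unfold opp; simpl; ring).
  apply (is_derive_minus (fun _ => xi beta 1) (fun t => RInt (fun s => RInt (fun tau => / (phi m c tau) ^ 2) 0 s) t 1)).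
  - apply (@is_derive_const R_AbsRing R_NormedModule).
  - apply (is_derive_RInt' G _ t 1).
    + eapply filter_imp; [|apply (loc_lt t Ht)]. intros y Hy.
      apply RInt_correct. apply ex_RInt_continuous. intros z Hz. apply G_cont.
      assert (Rmax y 1 < T0) by (apply Rmax_lub_lt; [lra | apply T0_gt1]). lra.
    + apply G_cont; auto.
Qed.

Lemma eta_d2 beta : Derive_n (eta beta m c) 2 1 = / c ^ 2.
Proof.
  simpl.
  rewrite (Derive_ext_loc _ G).
  - rewrite (is_derive_unique G 1 (h 1)) by (apply G_deriv; apply T0_gt1).
    unfold h, phi. f_equal. ring.
  - eapply filter_imp; [|apply (loc_lt 1 T0_gt1)]. intros y Hy.
    apply is_derive_unique. apply eta_deriv. auto.
Qed.
End E.

Theorem lemma5p4 (beta : nat -> R) (m c : R) :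
  is_model beta ->
  xi beta 1 = 1 ->
  ~ (exists a : R, forall t : R, -1 <= t <= 1 -> xi beta t = a * t ^ 2) ->
  0 < m -> 0 < c ->
  xi beta 1 = / m * (/ m * ln ((c + m) / c) - / (c + m)) ->
  / nu1 beta = c * (c + m) ->
  (Derive_n (eta beta m c) 2 1 >= nu2 beta <-> pure_like beta \/ critical beta).
Proof.
  intros Hmod Hx1 _ Hm Hc Hcon Hnu1.
  rewrite (eta_d2 m c Hm Hc beta).
  assert (Hge := nu2_ge_nu1 beta Hmod).
  set (K := c * (c + m)) in *.
  assert (HK : 0 < K) by (unfold K; nra).
  assert (Hn1 : nu1 beta = / K).
  { destruct (Req_dec (nu1 beta) 0) as [E|E].
    - rewrite E, Rinv_0 in Hnu1. lra.
    - rewrite <- Hnu1, Rinv_inv. reflexivity. }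
  set (r := nu2 beta * K).
  set (x := (c + m) / c).
  assert (Hx : 1 < x).
  { unfold x. apply Rmult_lt_reg_r with c; auto. field_simplify; lra. }
  assert (Hr : 1 <= r).
  { unfold r. rewrite Hn1 in Hge. apply Rmult_le_reg_r with (/ K).
    apply Rinv_0_lt_compat; auto. rewrite Rmult_assoc, Rinv_r by lra. lra. }
  assert (HABA : ABA beta = ff K r).
  { unfold ABA, ff. rewrite Hn1.
    replace (nu2 beta) with (r / K) by (unfold r; field; lra).
    assert (0 < r) by lra.
    replace (r / K / / K) with r by (field; lra). field. split; lra. }
  set (L := ln ((c + m) / c)) in *.
  assert (HL : L = m ^ 2 + m / (c + m)).
  { rewrite Hx1 in Hcon.
    apply (f_equal (Rmult (m ^ 2))) in Hcon.
    replace (m ^ 2 * (/ m * (/ m * L - / (c + m)))) with (L - m / (c + m)) in Hcon by (field; lra).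
    lra. }
  assert (Hfx : ff K x = 0).
  { unfold ff. unfold x at 1. fold L. rewrite HL. unfold x, K. field. lra. }
  assert (Hxe : x = / c ^ 2 * K) by (unfold x, K; field; lra).
  assert (Hk := key K x r HK Hx Hr Hfx).
  unfold pure_like, critical. rewrite HABA.
  split.
  - intros H. apply Rge_le in H.
    assert (r <= x). { unfold r. rewrite Hxe. apply Rmult_le_compat_r; lra. }
    apply Hk in H0. lra.
  - intros H. assert (H0 : 0 <= ff K r) by lra. apply Hk in H0.
    apply Rle_ge. unfold r in H0. rewrite Hxe in H0. apply Rmult_le_reg_r in H0; lra.
Qed.
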